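(* In the setting below, $$\sum_{\ell\in P^*}\bigl(|\Psi_+(\ell)|+|\Psi_{k+1}(\ell)|\bigr)=O(mr),$$ where the implied constant depends only on $\rho$, $c$ and $C$.
   Context: Let $P^*$ be a set of $m$ non-vertical lines in the plane, $\rho\ge 2$ and $c,C\ge1$ constants, $1\le r\le m$, and $k$ the integer with $\rho^{k-1}<r\le\rho^k$. Let $\Xi_0,\dots,\Xi_k,\Xi_{k+1}$ be a hierarchy of cuttings: $\Xi_0=\{\mathbb{R}^2\}$; for each $1\le i\le k+1$, $\Xi_i$ is a finite collection of closed triangles (''cells'') with pairwise disjoint interiors covering the plane, each cell of $\Xi_i$ is contained in a unique cell of $\Xi_{i-1}$ (its parent; it is a child of the parent), and every cell of $\Xi_{i-1}$ is the union of its children. A line crosses a cell if it meets its interior. Moreover: for $1\le i\le k$, $|\Xi_i|\le C\rho^{2i}$, each cell of $\Xi_{i-1}$ has at most $c$ children in $\Xi_i$, and each cell of $\Xi_i$ is crossed by at most $m/\rho^i$ lines of $P^*$; and $|\Xi_{k+1}|\le Cr^2$. For $\ell\in P^*$: $\Psi(\ell)$ is the set of cells of $\Xi_0,\dots,\Xi_k$ crossed by $\ell$; $\Psi_{k+1}(\ell)$ is the set of cells of $\Xi_{k+1}$ crossed by $\ell$; $\Psi_+(\ell)$ is the set of cells that are children of some cell of $\Psi(\ell)$ and lie completely above $\ell$ (contained in the closed half-plane above $\ell$ and not crossed by $\ell$). *)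

(* Defs.v *)
From HB Require Import structures.
From mathcomp Require Import all_boot all_order all_algebra.
From mathcomp Require Import all_classical all_reals all_analysis.
Set Implicit Arguments. Unset Strict Implicit. Unset Printing Implicit Defensive.
Import Order.TTheory GRing.Theory Num.Theory.
Import numFieldNormedType.Exports.
Local Open Scope classical_set_scope.
Local Open Scope ring_scope.

Section Geo.
Variable R : realType.

Local Notation pt := (R * R)%type.

(* a non-vertical line y = a x + b is encoded by the pair (a, b) *)
Definition on_line (l : R * R) (p : pt) : Prop := p.2 = l.1 * p.1 + l.2.

Definition halfplane (a b c : R) : set pt := [set p | a * p.1 + b * p.2 <= c].

(* a (possibly unbounded) closed triangle: intersection of three closed
   half-planes, with nonempty interior *)
Definition is_triangle (S : set pt) : Prop :=
  (exists a1 b1 c1 a2 b2 c2 a3 b3 c3 : R,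
     S = halfplane a1 b1 c1 `&` halfplane a2 b2 c2 `&` halfplane a3 b3 c3)
  /\ (interior S !=set0).

Definition crosses (l : R * R) (S : set pt) : Prop :=
  exists p, interior S p /\ on_line l p.

Definition lies_above (l : R * R) (S : set pt) : Prop :=
  S `<=` [set p | l.1 * p.1 + l.2 <= p.2] /\ ~ crosses l S.

Definition is_cutting (X : seq (set pt)) : Prop :=
  [/\ (forall j, (j < size X)%N -> is_triangle (nth set0 X j)),
      (forall j j', (j < size X)%N -> (j' < size X)%N -> j <> j' ->
        interior (nth set0 X j) `&` interior (nth set0 X j') = set0)
    & forall p : pt, exists2 j, (j < size X)%N & nth set0 X j p].

Definition refines (X Y : seq (set pt)) : Prop :=
  (forall j, (j < size X)%N ->
     exists j', [/\ (j' < size Y)%N, nth set0 X j `<=` nth set0 Y j' &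
        forall j'', (j'' < size Y)%N -> nth set0 X j `<=` nth set0 Y j'' ->
           j'' = j'])
  /\ (forall j', (j' < size Y)%N ->
        nth set0 Y j' =
        [set p | exists2 j, (j < size X)%N &
                   nth set0 X j `<=` nth set0 Y j' /\ nth set0 X j p]).

Definition nchildren (X : seq (set pt)) (S : set pt) : nat :=
  count (fun T => `[< T `<=` S >]) X.

Definition ncross (P : seq (R * R)) (S : set pt) : nat :=
  count (fun l => `[< crosses l S >]) P.

Definition hierarchy (rho c C r : R) (P : seq (R * R)) (k : nat)
  (Xi : nat -> seq (set pt)) : Prop :=
  [/\ Xi 0%N = [:: setT] /\
      (forall i, (1 <= i <= k.+1)%N -> is_cutting (Xi i) /\ refines (Xi i) (Xi i.-1)),
      (forall i, (1 <= i <= k)%N -> (size (Xi i))%:R <= C * rho ^+ (2 * i)),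
      (forall i, (1 <= i <= k)%N -> forall j, (j < size (Xi i.-1))%N ->
         (nchildren (Xi i) (nth set0 (Xi i.-1) j))%:R <= c),
      (forall i, (1 <= i <= k)%N -> forall j, (j < size (Xi i))%N ->
         (ncross P (nth set0 (Xi i) j))%:R <= (size P)%:R / rho ^+ i)
    & (size (Xi k.+1))%:R <= C * r ^+ 2].

(* |Psi_+(l)|: cells of level i+1 (0 <= i <= k) that are children of a cell
   of level i crossed by l and that lie completely above l; counted per level *)
Definition psi_plus (k : nat) (Xi : nat -> seq (set pt)) (l : R * R) : nat :=
  \sum_(i < k.+1)
    count (fun T => `[< (exists2 j, (j < size (Xi i))%N &
                          crosses l (nth set0 (Xi i) j) /\ T `<=` nth set0 (Xi i) j)
                        /\ lies_above l T >]) (Xi i.+1).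

Definition psi_last (k : nat) (Xi : nat -> seq (set pt)) (l : R * R) : nat :=
  count (fun T => `[< crosses l T >]) (Xi k.+1).

End Geo.

(* Main.v *)
Require Import Defs.
From HB Require Import structures.
From mathcomp Require Import all_boot all_order all_algebra.
From mathcomp Require Import all_classical all_reals all_analysis.
From mathcomp Require Import ring lra zify.
Import Order.TTheory GRing.Theory Num.Theory.
Import numFieldNormedType.Exports.
Local Open Scope classical_set_scope.
Local Open Scope ring_scope.

Lemma sum_count_swap (R : realType) (A B : Type) (x0 : B) (P : seq A) (X : seq B)
  (Q : A -> B -> bool) (b : R) :
  (forall t, (t < size X)%N -> (count (fun l => Q l (nth x0 X t)) P)%:R <= b) ->
  (\sum_(l <- P) count (Q l) X)%:R <= (size X)%:R * b.
Proof.
elim: X => [|T X IH] H.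
  by rewrite big1 // mul0r.
have -> : \sum_(l <- P) count (Q l) (T :: X) =
  (count (fun l => Q l T) P + \sum_(l <- P) count (Q l) X)%N.
  rewrite /= big_split /=; congr (_ + _)%N.
  elim: P {H IH} => [|a P IHP]; first by rewrite big_nil.
  by rewrite big_cons IHP.
rewrite natrD /= -[(size X).+1]add1n natrD mulrDl mul1r.
apply: lerD; first exact: (H 0%N).
by apply: IH => t Ht; apply: (H t.+1).
Qed.

Lemma geom_le (R : realType) (rho : R) (k : nat) : 2 <= rho ->
  \sum_(i < k) rho ^+ i <= rho ^+ k.
Proof.
move=> h2; elim: k => [|k IH]; first by rewrite big_ord0 expr0.
rewrite big_ord_recr /= exprS.
have hp : 0 <= rho ^+ k by apply: exprn_ge0; lra.
nra.
Qed.

Theorem lemma5 (R : realType) (rho c C : R) :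
  2 <= rho -> 1 <= c -> 1 <= C ->
  exists K : R, forall (P : seq (R * R)) (r : R) (k : nat)
    (Xi : nat -> seq (set (R * R))),
    uniq P ->
    1 <= r -> r <= (size P)%:R ->
    rho ^+ k / rho < r -> r <= rho ^+ k ->
    hierarchy rho c C r P k Xi ->
    (\sum_(l <- P) (psi_plus k Xi l + psi_last k Xi l)%N)%:R
      <= K * (size P)%:R * r.
Proof.
move=> h2 hc hC; exists (C * (rho ^+ 3 + 2)).
move=> P r k Xi _ hr1 hrm hrk1 hrk [[H0 Hcut] Hsize _ Hcr Hlast].
set m := size P.
have rpos : 0 < rho by lra.
have exp_pos : forall i, 0 < rho ^+ i by move=> i; apply: exprn_gt0.
have mge0 : 0 <= (m%:R : R) by [].
have crossb : forall i, (i <= k)%N -> forall j, (j < size (Xi i))%N ->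
    (ncross P (nth set0 (Xi i) j))%:R <= m%:R / rho ^+ i.
  move=> [|i] hi j hj.
    by rewrite expr0 divr1 ler_nat /ncross count_size.
  exact: Hcr.
have parent : forall i, (i <= k)%N -> forall t, (t < size (Xi i.+1))%N ->
    exists j', [/\ (j' < size (Xi i))%N,
       nth set0 (Xi i.+1) t `<=` nth set0 (Xi i) j' &
       forall j'', (j'' < size (Xi i))%N ->
          nth set0 (Xi i.+1) t `<=` nth set0 (Xi i) j'' -> j'' = j'].
  move=> i hi t ht.
  have [_ [Hr _]] := Hcut i.+1 ltac:(apply/andP; split => //).
  exact: Hr.
pose Q i (l : R * R) (T : set (R * R)) :=
  `[< exists2 j, (j < size (Xi i))%N &
        crosses l (nth set0 (Xi i) j) /\ T `<=` nth set0 (Xi i) j >].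
have keyi : forall i, (i <= k)%N ->
    (\sum_(l <- P) count (Q i l) (Xi i.+1))%:R
      <= (size (Xi i.+1))%:R * (m%:R / rho ^+ i).
  move=> i hi; apply: (@sum_count_swap R _ _ set0 P (Xi i.+1) (Q i)) => t ht.
  have [j' [hj' hsub huniq]] := parent i hi t ht.
  apply: le_trans (crossb i hi j' hj'); rewrite ler_nat.
  apply: sub_count => l /asboolP [j hj [hcr hs]].
  by apply/asboolP; rewrite -(huniq j hj hs).
have lastb : (\sum_(l <- P) psi_last k Xi l)%:R
      <= (size (Xi k.+1))%:R * (m%:R / rho ^+ k).
  apply: (@sum_count_swap R _ _ set0 P (Xi k.+1) (fun l T => `[< crosses l T >])) => t ht.
  have [j' [hj' hsub huniq]] := parent k (leqnn k) t ht.
  apply: le_trans (crossb k (leqnn k) j' hj'); rewrite ler_nat.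
  apply: sub_count => l /asboolP [p [hp hl]].
  by apply/asboolP; exists p; split => //; apply: (interiorS hsub).
have plusb : (\sum_(l <- P) psi_plus k Xi l)%:R
      <= \sum_(i < k.+1) (size (Xi i.+1))%:R * (m%:R / rho ^+ i).
  rewrite /psi_plus exchange_big /= natr_sum; apply: ler_sum => i _.
  apply: le_trans (keyi i _); last by rewrite -ltnS.
  rewrite ler_nat; apply: leq_sum => l _; apply: sub_count => T /asboolP [h _].
  exact/asboolP.
rewrite big_split natrD /=.
apply: le_trans (lerD plusb lastb) _.
rewrite big_ord_recr /=.
have dm : forall i, 0 <= (m%:R : R) / rho ^+ i.
  by move=> i; apply: divr_ge0 => //; apply: ltW.
have termb : forall i : 'I_k, (size (Xi (widen_ord (leqnSn k) i).+1))%:R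
     * (m%:R / rho ^+ (widen_ord (leqnSn k) i))
     <= C * rho ^+ 2 * m%:R * rho ^+ i.
  move=> i /=.
  have hi : (1 <= i.+1 <= k)%N by rewrite ltn_ord.
  apply: le_trans (ler_wpM2r (dm i) (Hsize _ hi)) _.
  have -> : (2 * i.+1 = i + (i + 2))%N by lia.
  rewrite !exprD.
  have nz : rho ^+ i != 0 by apply: lt0r_neq0.
  rewrite le_eqVlt; apply/orP; left; apply/eqP; field.
  exact: nz.
have sumb : \sum_(i < k) (size (Xi (widen_ord (leqnSn k) i).+1))%:R
     * (m%:R / rho ^+ (widen_ord (leqnSn k) i))
     <= C * rho ^+ 2 * m%:R * rho ^+ k.
  apply: le_trans (ler_sum _ (fun i _ => termb i)) _.
  rewrite -mulr_sumr; apply: ler_wpM2l; last exact: geom_le.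
  apply: mulr_ge0 => //; apply: mulr_ge0; [lra | apply: exprn_ge0; lra].
have rpos' : 0 < r by lra.
have tk : (size (Xi k.+1))%:R * (m%:R / rho ^+ k) <= C * r * m%:R.
  have h1 : (m%:R : R) / rho ^+ k <= m%:R / r.
    apply: ler_wpM2l => //; rewrite lef_pV2 ?posrE //.
  apply: le_trans (ler_pM _ (dm k) Hlast h1) _ => //.
  rewrite le_eqVlt; apply/orP; left; apply/eqP; field.
  exact: lt0r_neq0.
have rhok : rho ^+ k <= rho * r.
  by move: hrk1; rewrite ltr_pdivrMr // => h; rewrite mulrC; apply: ltW.
have hm0 : 0 <= C * rho ^+ 2 * m%:R.
  apply: mulr_ge0 => //; apply: mulr_ge0; [lra | apply: exprn_ge0; lra].
have e1 : C * rho ^+ 2 * m%:R * rho ^+ k <= C * rho ^+ 2 * m%:R * (rho * r).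
  exact: ler_wpM2l.
have e2 : C * rho ^+ 2 * m%:R * (rho * r) = C * rho ^+ 3 * m%:R * r.
  by rewrite exprS; ring.
have e3 : C * (rho ^+ 3 + 2) * m%:R * r =
   C * rho ^+ 3 * m%:R * r + C * r * m%:R + C * r * m%:R by ring.
rewrite e3; apply: lerD => //; apply: lerD => //.
by apply: le_trans sumb _; rewrite -e2.
Qed.
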